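(* Let $p_1,\ldots,p_m\in[0,1]$, $\alpha\in[0,1]$, $h=h_\alpha$ as in the context, and let $S\subseteq\{1,\ldots,m\}$ be nonempty. Define \[ z_\alpha=\begin{cases}0,&\text{if } h=m,\\ \min\{m-h\le i\le m: h\,p_{(i)}\le (i-m+h+1)\alpha\},&\text{otherwise.}\end{cases} \] Then the maximum of $1-u+|\{i\in S: hp_i\le u\alpha\}|$ over $1\le u\le |S|$ is attained for some $1\le u\le z_\alpha-m+h+1$.
   Context: Setting: $m$ hypotheses with $p$-values $p_1,\ldots,p_m\in[0,1]$; $p_{(1)}\le\cdots\le p_{(m)}$ are the ordered $p$-values (with the convention $p_{(0)}$ not used). For $I\subseteq\{1,\ldots,m\}$, $p_{(i:I)}$ denotes the $i$-th smallest of $\{p_j:j\in I\}$. The Simes local test rejects $I$ ($I\in\mathcal{U}_\alpha$) iff there is $1\le i\le |I|$ with $|I|\,p_{(i:I)}\le i\alpha$. Let $r_1,\ldots,r_m$ be a permutation with $p_{r_i}=p_{(i)}$, $K_i=\{r_{m-i+1},\ldots,r_m\}$, and $h_\alpha=\max\{0\le i\le m: K_i\notin\mathcal{U}_\alpha\}$. *)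

(* Defs.v *)
From HB Require Import structures.
From mathcomp Require Import all_boot all_order all_algebra all_fingroup.
Set Implicit Arguments. Unset Strict Implicit. Unset Printing Implicit Defensive.
Import Order.TTheory GRing.Theory Num.Theory.
Local Open Scope ring_scope.

Section Simes.
Variables (R : realFieldType) (m : nat) (p : 'I_m -> R) (alpha : R).

Definition pI (I : {set 'I_m}) (i : nat) : R :=
  nth 0 (sort <=%R [seq p j | j <- enum I]) i.-1.

Definition simes_rej (I : {set 'I_m}) : bool :=
  [exists i : 'I_(#|I|.+1), (0 < (i : nat))%N && (#|I|%:R * pI I i <= (i : nat)%:R * alpha)].

Variable r : {perm 'I_m}.
Definition sorting_perm : Prop :=
  forall i j : 'I_m, (i <= j)%N -> p (r i) <= p (r j).

Definition pord (i : nat) : R := nth 0 [seq p (r k) | k <- enum 'I_m] i.-1.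

(* K_i = {r_{m-i+1}, ..., r_m} (1-based), i.e. 0-based k >= m - i. *)
Definition Kset (i : nat) : {set 'I_m} := [set r k | k : 'I_m & (m - i <= k)%N].

Definition halpha : nat := \max_(i < m.+1 | ~~ simes_rej (Kset i)) (i : nat).

(* z_alpha = 0 if h = m, else min{m-h <= i <= m : h p_(i) <= (i-m+h+1) alpha}.
   (The set is provably nonempty when h < m; the default m of the big min
   is never reached.) *)
Definition zalpha : nat :=
  let h := halpha in
  if h == m then 0%N
  else \big[minn/m]_(m - h <= i < m.+1 |
          h%:R * pord i <= (i + h + 1 - m)%:R * alpha) i.

Definition objS (S : {set 'I_m}) (u : nat) : int :=
  (1%:Z - u%:Z + (#|[set i in S | halpha%:R * p i <= u%:R * alpha]|)%:Z)%R.

End Simes.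

(* Main.v *)
Require Import Defs.
From HB Require Import structures.
From mathcomp Require Import all_boot all_order all_algebra all_fingroup.
From mathcomp Require Import zify.
Import Order.TTheory GRing.Theory Num.Theory.
Local Open Scope ring_scope.

Section Pf.
Variables (R : realFieldType) (n : nat) (p : 'I_n.+1 -> R) (alpha : R)
  (r : {perm 'I_n.+1}).
Hypothesis p01 : forall j, 0 <= p j <= 1.
Hypothesis a01 : 0 <= alpha <= 1.
Hypothesis sr : sorting_perm p r.
Local Notation m := n.+1.
Let q (k : 'I_m) := p (r k).

Lemma pordE (k : 'I_m) : pord p r k.+1 = q k.
Proof. by rewrite /pord /= (nth_map k) ?size_enum_ord // nth_ord_enum. Qed.

Lemma simes_rejP (I : {set 'I_m}) :
  reflect (exists j, [/\ (0 < j)%N, (j <= #|I|)%N &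
     #|I|%:R * pI p I j <= j%:R * alpha]) (simes_rej p alpha I).
Proof.
apply: (iffP existsP) => [[i /andP[i0 H]]|[j [j0 jI H]]].
  by exists i; split => //; rewrite -ltnS.
by exists (Ordinal (jI : (j < #|I|.+1)%N)); rewrite /= j0.
Qed.

Lemma Kseq i : (i <= m)%N -> sort <=%R [seq p j | j <- enum (Kset r i)]
   = [seq q (inord k) | k <- iota (m - i) i].
Proof.
move=> im.
have Hs : sorted <=%R [seq q (inord k) | k <- iota (m - i) i].
  apply: (homo_sorted_in (P := fun k => (k < m)%N) (e := leq)); last first.
  - exact: iota_sorted.
  - by apply/allP => k; rewrite mem_iota; lia.
  move=> a b ha hb ab; apply: sr; rewrite /= !inordK //.
rewrite -(sorted_sort le_trans Hs); apply/perm_sortP.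
- by move=> x y; exact: le_total.
- by move=> x y z; exact: le_trans.
- by move=> x y; exact: le_anti.
have -> : [seq q (inord k) | k <- iota (m - i) i] =
  map p [seq r (inord k) | k <- iota (m - i) i] :> seq R by rewrite -map_comp.
apply: perm_map; apply: uniq_perm; first exact: enum_uniq.
  rewrite map_inj_in_uniq ?iota_uniq // => a b; rewrite !mem_iota => ha hb.
  move/perm_inj => /(congr1 val); rewrite /= !inordK //; lia.
move=> x; rewrite mem_enum; apply/imsetP/mapP => [[k]|[k]].
  rewrite inE => hk ->; exists (nat_of_ord k); first by rewrite mem_iota; have := ltn_ord k; lia.
  by rewrite inord_val.
rewrite mem_iota => hk ->; exists (inord k) => //.
by rewrite inE inordK; lia.
Qed.

Lemma cardK i : (i <= m)%N -> #|Kset r i| = i.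
Proof.
move=> im; rewrite cardE -(size_map p) -(size_sort <=%R) Kseq //.
by rewrite size_map size_iota.
Qed.

Lemma pIK i j : (i <= m)%N -> (1 <= j <= i)%N ->
  pI p (Kset r i) j = q (inord (m - i + j.-1)).
Proof.
move=> im hj; rewrite /pI Kseq // (nth_map 0%N) ?size_iota; last by lia.
by rewrite nth_iota //; lia.
Qed.

Lemma bigmin_prop (s : seq nat) (P : pred nat) d :
  let z := \big[minn/d]_(i <- s | P i) i in
  (z = d \/ (z \in s /\ P z)) /\ (forall i, i \in s -> P i -> (z <= i)%N).
Proof.
elim: s => [|x s [IH1 IH2]] /=; first by rewrite big_nil; split => //; left.
rewrite big_cons; case: ifP => Px.
  split.
    rewrite /minn; case: ifP => _; first by right; rewrite inE eqxx.
    by case: IH1 => [->|[h1 h2]]; [left|right; rewrite inE h1 orbT].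
  move=> i; rewrite inE => /orP[/eqP->|iS] Pi; first exact: geq_minl.
  by apply: leq_trans (geq_minr _ _) (IH2 _ iS Pi).
split.
  by case: IH1 => [->|[h1 h2]]; [left|right; rewrite inE h1 orbT].
move=> i; rewrite inE => /orP[/eqP->|iS] Pi; first by rewrite Px in Pi.
exact: IH2.
Qed.

Lemma h_prop : let h := halpha p alpha r in
  [/\ (h <= m)%N, ~~ simes_rej p alpha (Kset r h) &
      (h < m)%N -> simes_rej p alpha (Kset r h.+1)].
Proof.
move=> h.
have K: (h <= m)%N && ~~ simes_rej p alpha (Kset r h).
  rewrite /h /halpha; apply: (big_ind (fun x => (x <= m)%N && ~~ simes_rej p alpha (Kset r x))).
  - rewrite leq0n /=; apply/simes_rejP => [[j [j0 jI _]]].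
    by move: jI; rewrite cardK //; lia.
  - move=> x y hx hy; rewrite /maxn; by case: ifP.
  - by move=> i ->; rewrite -ltnS ltn_ord.
case/andP: K => K1 K2; split => // hlt.
apply: contraT => H.
have := @leq_bigmax_cond _
         (fun i : 'I_m.+1 => ~~ simes_rej p alpha (Kset r i))
         (fun i : 'I_m.+1 => (i : nat))
         (Ordinal (hlt : (h.+1 < m.+1)%N)) H.
by rewrite /= -/(halpha p alpha r) -/h ltnn.
Qed.

Lemma z_prop : let h := halpha p alpha r in let z := zalpha p alpha r in
  (m - h <= z)%N /\ (z <= m)%N /\
  forall k : 'I_m, (k < z)%N -> h%:R * q k <= (z + h + 1 - m)%:R * alpha.
Proof.
move=> h z; have [hm nrej rejS] := h_prop; rewrite -/h in hm nrej rejS.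
have [zlo [zm Pz]] : (m - h <= z)%N /\ (z <= m)%N /\
   (h != m -> h%:R * pord p r z <= (z + h + 1 - m)%:R * alpha).
  have [/eqP hEm|hnm] := boolP (h == m).
    have z0 : z = 0%N by rewrite /z /zalpha -/h hEm eqxx.
    rewrite z0; split; first lia. split; first lia. by rewrite hEm; move/eqP.
  have hlt : (h < m)%N by rewrite ltn_neqAle hnm hm.
  have zE : z = \big[minn/m]_(m - h <= i < m.+1 |
          h%:R * pord p r i <= (i + h + 1 - m)%:R * alpha) i.
    by rewrite /z /zalpha -/h (negbTE hnm).
  move: (rejS hlt) => /simes_rejP [j [j0 jI Hj]].
  rewrite cardK // in jI Hj; rewrite pIK // in Hj; last by rewrite j0.
  set i' := (m - h.+1 + j)%N.
  have Pi' : h%:R * pord p r i' <= (i' + h + 1 - m)%:R * alpha.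
    have -> : i' = (inord (m - h.+1 + j.-1) : 'I_m).+1.
      by rewrite inordK /i'; lia.
    rewrite pordE; have -> : ((inord (m - h.+1 + j.-1) : 'I_m).+1 + h + 1 - m)%N = j.
      by rewrite inordK; lia.
    apply: le_trans Hj; apply: ler_wpM2r; first by case/andP: (p01 (r (inord (m - h.+1 + j.-1)))).
    by rewrite ler_nat.
  have i'in : i' \in index_iota (m - h) m.+1 by rewrite mem_index_iota /i'; lia.
  have [[zd|[zin Pz]] zmin] := bigmin_prop (index_iota (m - h) m.+1)
    (fun i => h%:R * pord p r i <= (i + h + 1 - m)%:R * alpha) m; rewrite -zE in zmin.
  - rewrite -zE in zd. have := zmin _ i'in Pi'; rewrite zd => mi'.
    have ei : i' = m by move: jI; rewrite /i'; lia.
    split; first lia. split => // _. by move: Pi'; rewrite ei.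
  - rewrite -zE in zin Pz; move: zin; rewrite mem_index_iota => zin.
    split; first lia. split; first lia. by [].
split => //; split => // k kz.
have hnm : h != m.
  apply/eqP => hEm; move: kz.
  have -> : z = 0%N by rewrite /z /zalpha -/h hEm eqxx.
  by [].
have z1 : (0 < z)%N by lia.
have Ez : z = (inord z.-1 : 'I_m).+1 by rewrite inordK; lia.
apply: le_trans (Pz hnm); rewrite [in X in _ <= X]Ez pordE.
apply: ler_wpM2l; first by [].
apply: sr; rewrite inordK; lia.
Qed.

Lemma count_step (S : {set 'I_m}) u :
  let h := halpha p alpha r in let z := zalpha p alpha r in
  let B := (z + h + 1 - m)%N in
  (B <= u <= m)%N ->
  (#|[set i in S | (h%:R * p i <= u%:R * alpha)%R]| <=
   #|[set i in S | (h%:R * p i <= B%:R * alpha)%R]| + (u - B))%N.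
Proof.
move=> h z B hu.
have [hm nrej _] := h_prop; rewrite -/h in hm nrej.
have [zlo [zm FC]] := z_prop; rewrite -/h -/z in zlo zm FC.
have FA : forall t, (1 <= t <= h)%N ->
    t%:R * alpha < h%:R * q (inord (m - h + t.-1)).
  move=> t ht; rewrite ltNge; apply/negP => H; apply: (elimN (simes_rejP _) nrej).
  exists t; rewrite cardK // pIK //; split => //; lia.
set D := [set j | (B%:R * alpha < h%:R * p j) && (h%:R * p j <= u%:R * alpha)].
have sub : [set i in S | h%:R * p i <= u%:R * alpha] \subset
           [set i in S | h%:R * p i <= B%:R * alpha] :|: D.
  apply/subsetP => j; rewrite !inE => /andP[jS ju]; rewrite jS /=.
  by case: leP => //= ->.
apply: leq_trans (subset_leq_card sub) _; rewrite cardsU.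
apply: leq_trans (leq_subr _ _) _; rewrite leq_add2l.
set E := [set k : 'I_m | (z <= k < m - h + u.-1)%N].
have subD : D \subset r @: E.
  apply/subsetP => j; rewrite inE => /andP[Bj ju].
  apply/imsetP; exists (r^-1 j)%g; last by rewrite permKV.
  set k := (r^-1 j)%g.
  have qk : q k = p j by rewrite /q /k permKV.
  have kz : (z <= k)%N.
    rewrite leqNgt; apply/negP => kz; have := FC k kz; rewrite qk.
    by rewrite leNgt Bj.
  have kl := ltn_ord k.
  have := FA (k - (m - h)).+1; rewrite /=.
  have -> : inord (m - h + (k - (m - h)).+1.-1) = k.
    by apply: val_inj; rewrite /= inordK; lia.
  rewrite qk => /(_ ltac:(lia)) tl.
  rewrite inE; apply/andP; split => //.
  have : ((k - (m - h)).+1 < u)%N.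
    rewrite ltnNge; apply/negP => ut.
    have : u%:R * alpha <= (k - (m - h)).+1%:R * alpha.
      by apply: ler_wpM2r; [case/andP: a01|rewrite ler_nat].
    by move=> H; have := lt_le_trans tl (le_trans ju H); rewrite ltxx.
  lia.
apply: leq_trans (subset_leq_card subD) _.
apply: leq_trans (leq_imset_card _ _) _.
have <- : size (iota z (u - B)) = (u - B)%N by rewrite size_iota.
rewrite cardE -(size_map val); apply: uniq_leq_size.
  by rewrite (map_inj_uniq val_inj) enum_uniq.
move=> x /mapP [k]; rewrite mem_enum inE => kE ->; rewrite mem_iota.
change (\val k) with (nat_of_ord k); move: hu; rewrite /B; lia.
Qed.

Lemma argmax (f : nat -> int) N : (1 <= N)%N ->
  exists u, [/\ (1 <= u)%N, (u <= N)%N &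
    forall v, (1 <= v)%N -> (v <= N)%N -> f v <= f u].
Proof.
elim: N => [//|N IH] _.
have [N0|Npos] := posnP N.
  exists 1%N; split => //; rewrite N0 => v v1 v2.
  by have -> : v = 1%N by lia.
have [u [u1 uN uM]] := IH Npos.
have [le|lt] := leP (f N.+1) (f u).
  exists u; split => //; first lia.
  move=> v v1 v2; have [->|vN] := eqVneq v N.+1; first exact: le.
  apply: uM => //; lia.
exists N.+1; split => // v v1 v2; have [->|vN] := eqVneq v N.+1; first by [].
apply: le_trans (uM v v1 _) (ltW lt); lia.
Qed.

Lemma mainS (S : {set 'I_m}) : S != set0 ->
  exists u : nat,
    [/\ (1 <= u)%N, (u <= #|S|)%N,
        (u <= zalpha p alpha r + halpha p alpha r + 1 - m)%N &
        forall v : nat, (1 <= v)%N -> (v <= #|S|)%N ->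
          (objS p alpha r S v <= objS p alpha r S u)%R].
Proof.
move=> S0.
have [hm _ _] := h_prop.
have [zlo [zm _]] := z_prop.
set h := halpha p alpha r in hm zlo *; set z := zalpha p alpha r in zlo zm *.
set B := (z + h + 1 - m)%N.
have B1 : (1 <= B)%N by rewrite /B; lia.
have S1 : (1 <= #|S|)%N by rewrite card_gt0.
have Sm : (#|S| <= m)%N by rewrite -[X in (_ <= X)%N]card_ord max_card.
have [u [u1 uN uM]] := argmax (objS p alpha r S) (minn B #|S|) ltac:(lia).
exists u; split => //; try lia.
move=> v v1 vS.
have [vB|Bv] := leqP v B; first by apply: uM => //; lia.
apply: le_trans (uM B B1 ltac:(lia)).
have := @count_step S v ltac:(rewrite -/h -/z -/B; lia).
rewrite -/h -/z -/B /objS -/h => H.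
lia.
Qed.
End Pf.

Theorem lemma3 (R : realFieldType) (m : nat) (p : 'I_m -> R) (alpha : R)
  (r : {perm 'I_m}) (S : {set 'I_m}) :
  (forall j, 0 <= p j <= 1) -> 0 <= alpha <= 1 ->
  sorting_perm p r ->
  S != set0 ->
  exists u : nat,
    [/\ (1 <= u)%N, (u <= #|S|)%N,
        (u <= zalpha p alpha r + halpha p alpha r + 1 - m)%N &
        forall v : nat, (1 <= v)%N -> (v <= #|S|)%N ->
          (objS p alpha r S v <= objS p alpha r S u)%R].
Proof.
case: m p r S => [|n] p r S hp ha hs hS.
  by case/set0Pn: hS => [[x]].
exact: mainS.
Qed.
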